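(* cw$^m$-entailment satisfies all KLM postulates of preferential consequence relations, namely (reading ${\bf T}(C)\sqsubseteq D$ as the conditional $C \mid\!\sim D$): (REFL) ${\bf T}(C) \sqsubseteq C$; (LLE) if $A \equiv B$ and ${\bf T}(A) \sqsubseteq C$, then ${\bf T}(B) \sqsubseteq C$; (RW) if $C \sqsubseteq D$ and ${\bf T}(A) \sqsubseteq C$, then ${\bf T}(A) \sqsubseteq D$; (AND) if ${\bf T}(A) \sqsubseteq C$ and ${\bf T}(A) \sqsubseteq D$, then ${\bf T}(A) \sqsubseteq C \sqcap D$; (OR) if ${\bf T}(A) \sqsubseteq C$ and ${\bf T}(B) \sqsubseteq C$, then ${\bf T}(A \sqcup B) \sqsubseteq C$; (CM) if ${\bf T}(A) \sqsubseteq D$ and ${\bf T}(A) \sqsubseteq C$, then ${\bf T}(A \sqcap D) \sqsubseteq C$.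
   Context: Setting: the description logic ${\mathcal{EL}}^{+}_{\bot}$ extended with a typicality operator ${\bf T}$. A ranked knowledge base over a finite set ${\cal C}=\{C_1,\ldots,C_k\}$ of distinguished concepts is $K=\langle {\cal T}_{strict}, {\cal T}_{C_1}, \ldots, {\cal T}_{C_k}, {\cal A} \rangle$, with ${\cal T}_{strict}$ strict concept/role inclusions, ${\cal A}$ an ABox, and each ${\cal T}_{C_j}$ a set of typicality inclusions ${\bf T}(C_j)\sqsubseteq D$ with non-negative integer ranks. For each $C_j$, a total preorder $\leq_{C_j}$ on the domain compares elements by the number of rank-$l$ inclusions of ${\cal T}_{C_j}$ they satisfy, lexicographically from the highest rank. A cw$^m$-model $(\Delta, <_{C_1}, \ldots, <_{C_k}, <, \cdot^I)$ of $K$ satisfies ${\cal T}_{strict}$ and ${\cal A}$, has these $<_{C_j}$, and a global preference $x<y$ iff $x<_{C_i}y$ for some $C_i$ and, for all $C_j$, $x\leq_{C_j}y$ or $x<_{C_h}y$ for some $C_h$ strictly more specific than $C_j$; a typicality concept is interpreted as $({\bf T}(C))^I=\min_<(C^I)$. It is ${\bf T}$-compliant if each nonempty $C_h\in{\cal C}$ has an instance satisfying all of ${\cal T}_{C_h}$, and canonical if every consistent combination of concepts occurring in $K$ and their complements is realized by some domain element. $K\models_{cw^m}{\bf T}(C)\sqsubseteq D$ iff ${\bf T}(C)\sqsubseteq D$ holds in all canonical and ${\bf T}$-compliant cw$^m$-models of $K$. In (LLE) and (RW), $A\equiv B$ and $C\sqsubseteq D$ are understood as holding in all ${\mathcal{EL}}^{+}_{\bot}$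 interpretations. *)

(* Defs.v *)
From Stdlib Require Import List ClassicalDescription.
Import ListNotations.
Set Implicit Arguments.

Section DL.
Variables NC NR NI : Type.

(* Concepts.  KB concepts must be EL+_bot concepts (no [COr], see [is_EL]);
   [COr] is needed to form the query concept A ⊔ B of postulate (OR). *)
Inductive concept : Type :=
| CTop : concept
| CBot : concept
| CAtom : NC -> concept
| CAnd : concept -> concept -> concept
| COr : concept -> concept -> concept
| CEx : NR -> concept -> concept.

Fixpoint is_EL (c : concept) : Prop :=
  match c with
  | CTop | CBot | CAtom _ => True
  | CAnd c d => is_EL c /\ is_EL d
  | COr _ _ => False
  | CEx _ c => is_EL c
  end.

Fixpoint subconcepts (c : concept) : list concept :=
  c :: match c with
       | CTop | CBot | CAtom _ => []
       | CAnd c d | COr c d => subconcepts c ++ subconcepts d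
       | CEx _ c => subconcepts c
       end.

Record interp (Delta : Type) := {
  icn : NC -> Delta -> Prop;
  irn : NR -> Delta -> Delta -> Prop;
  iind : NI -> Delta }.

Fixpoint ext (Delta : Type) (I : interp Delta) (c : concept) : Delta -> Prop :=
  match c with
  | CTop => fun _ => True
  | CBot => fun _ => False
  | CAtom a => icn I a
  | CAnd c d => fun x => ext I c x /\ ext I d x
  | COr c d => fun x => ext I c x \/ ext I d x
  | CEx r c => fun x => exists y, irn I r x y /\ ext I c y
  end.

Fixpoint chain (Delta : Type) (I : interp Delta) (rs : list NR) : Delta -> Delta -> Prop :=
  match rs with
  | [] => fun x y => x = y
  | r :: rs => fun x z => exists y, irn I r x y /\ chain I rs y z
  end.

(* Ranked knowledge base <T_strict, T_C1, ..., T_Ck, A>.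
   [kb_dist] lists the pairs (C_j, T_Cj); an element (D, l) of T_Cj stands
   for the typicality inclusion T(C_j) ⊑ D with rank l. *)
Record KB := {
  kb_ci : list (concept * concept);          (* strict concept inclusions C ⊑ D *)
  kb_ri : list (list NR * NR);               (* role inclusions r1 o..o rn ⊑ s *)
  kb_dist : list (concept * list (concept * nat));
  kb_acon : list (concept * NI);             (* assertions C(a) *)
  kb_arole : list (NR * NI * NI) }.          (* assertions r(a,b) *)

Definition wf_KB (K : KB) : Prop :=
  (forall C D, In (C, D) (kb_ci K) -> is_EL C /\ is_EL D) /\
  (forall rs s, In (rs, s) (kb_ri K) -> rs <> []) /\
  (forall C T, In (C, T) (kb_dist K) ->
     is_EL C /\ forall D l, In (D, l) T -> is_EL D) /\
  NoDup (map fst (kb_dist K)) /\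
  (forall C a, In (C, a) (kb_acon K) -> is_EL C).

Definition sat_strict (K : KB) (Delta : Type) (I : interp Delta) : Prop :=
  (forall C D, In (C, D) (kb_ci K) -> forall x, ext I C x -> ext I D x) /\
  (forall rs s, In (rs, s) (kb_ri K) -> forall x y, chain I rs x y -> irn I s x y).

Definition sat_abox (K : KB) (Delta : Type) (I : interp Delta) : Prop :=
  (forall C a, In (C, a) (kb_acon K) -> ext I C (iind I a)) /\
  (forall r a b, In (r, a, b) (kb_arole K) -> irn I r (iind I a) (iind I b)).

Definition strict_subsumes (K : KB) (C D : concept) : Prop :=
  forall (Delta : Type) (I : interp Delta), sat_strict K I ->
    forall x, ext I C x -> ext I D x.

Definition more_specific (K : KB) (Ch Cj : concept) : Prop :=
  strict_subsumes K Ch Cj /\ ~ strict_subsumes K Cj Ch.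

Fixpoint countP (A : Type) (P : A -> Prop) (l : list A) : nat :=
  match l with
  | [] => 0
  | a :: l => (if excluded_middle_informative (P a) then 1 else 0) + countP P l
  end.

(* x satisfies T(C) ⊑ D  iff  x ∈ (¬C ⊔ D)^I *)
Definition sat_typ (Delta : Type) (I : interp Delta) (C D : concept) (x : Delta) : Prop :=
  ~ ext I C x \/ ext I D x.

Definition nsat (Delta : Type) (I : interp Delta) (C : concept)
  (T : list (concept * nat)) (l : nat) (x : Delta) : nat :=
  countP (fun p => snd p = l /\ sat_typ I C (fst p) x) T.

Definition ltC (Delta : Type) (I : interp Delta) (C : concept)
  (T : list (concept * nat)) (x y : Delta) : Prop :=
  exists l, nsat I C T l x > nsat I C T l y /\
            forall h, h > l -> nsat I C T h x = nsat I C T h y.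

Definition leC (Delta : Type) (I : interp Delta) (C : concept)
  (T : list (concept * nat)) (x y : Delta) : Prop :=
  ltC I C T x y \/ forall l, nsat I C T l x = nsat I C T l y.

Definition gpref (K : KB) (Delta : Type) (I : interp Delta) (x y : Delta) : Prop :=
  (exists Ci Ti, In (Ci, Ti) (kb_dist K) /\ ltC I Ci Ti x y) /\
  (forall Cj Tj, In (Cj, Tj) (kb_dist K) ->
     leC I Cj Tj x y \/
     exists Ch Th, In (Ch, Th) (kb_dist K) /\ more_specific K Ch Cj /\ ltC I Ch Th x y).

Definition typ_ext (K : KB) (Delta : Type) (I : interp Delta) (C : concept) (x : Delta) : Prop :=
  ext I C x /\ ~ exists y, ext I C y /\ gpref K I y x.

(* cw^m-model: the preferences are determined by I as above *)
Definition cwm_model (K : KB) (Delta : Type) (I : interp Delta) : Prop :=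
  inhabited Delta /\ sat_strict K I /\ sat_abox K I.

Definition T_compliant (K : KB) (Delta : Type) (I : interp Delta) : Prop :=
  forall Ch Th, In (Ch, Th) (kb_dist K) ->
    (exists x, ext I Ch x) ->
    exists x, ext I Ch x /\ forall D l, In (D, l) Th -> ext I D x.

Definition KB_concepts (K : KB) : list concept :=
  flat_map (fun p => subconcepts (fst p) ++ subconcepts (snd p)) (kb_ci K) ++
  flat_map (fun p => subconcepts (fst p) ++
                     flat_map (fun q => subconcepts (fst q)) (snd p)) (kb_dist K) ++
  flat_map (fun p => subconcepts (fst p)) (kb_acon K).

(* a combination chooses, for each concept C occurring in K, C or its complement *)
Definition realizes (K : KB) (Delta : Type) (I : interp Delta) (f : concept -> bool)
  (x : Delta) : Prop :=
  forall C, In C (KB_concepts K) -> (ext I C x <-> f C = true).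

Definition consistent_comb (K : KB) (f : concept -> bool) : Prop :=
  exists (Delta : Type) (I : interp Delta) (x : Delta),
    cwm_model K I /\ realizes K I f x.

Definition canonical (K : KB) (Delta : Type) (I : interp Delta) : Prop :=
  forall f, consistent_comb K f -> exists x, realizes K I f x.

Definition cwm_entails (K : KB) (C D : concept) : Prop :=
  forall (Delta : Type) (I : interp Delta),
    cwm_model K I -> canonical K I -> T_compliant K I ->
    forall x, typ_ext K I C x -> ext I D x.

Definition valid_incl (C D : concept) : Prop :=
  forall (Delta : Type) (I : interp Delta) x, ext I C x -> ext I D x.

Definition valid_equiv (C D : concept) : Prop := valid_incl C D /\ valid_incl D C.

End DL.

(* Main.v *)
Require Import Defs.
From Stdlib Require Import Arith List Lia Classical Wf_nat ClassicalDescription.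
Import ListNotations.

Section Aux.
Variables NC NR NI : Type.
Variable K : KB NC NR NI.
Variable Delta : Type.
Variable I : interp NC NR NI Delta.

Lemma countP_ext (A : Type) (P Q : A -> Prop) l :
  (forall a, In a l -> (P a <-> Q a)) -> countP P l = countP Q l.
Proof.
  induction l; simpl; intros H; auto.
  rewrite IHl by auto.
  destruct (excluded_middle_informative (P a)); destruct (excluded_middle_informative (Q a));
  auto; exfalso; firstorder.
Qed.

Lemma countP_mono (A : Type) (P Q : A -> Prop) l :
  (forall a, In a l -> P a -> Q a) -> countP P l <= countP Q l.
Proof.
  induction l; simpl; intros H; auto.
  assert (countP P l <= countP Q l) by auto.
  destruct (excluded_middle_informative (P a)); destruct (excluded_middle_informative (Q a));
  try lia. exfalso; eauto.
Qed.

Lemma countP_lt (A : Type) (P Q : A -> Prop) l :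
  (forall a, In a l -> P a -> Q a) -> (exists a, In a l /\ Q a /\ ~ P a) ->
  countP P l < countP Q l.
Proof.
  induction l; simpl; intros H [b [Hb [HQ HP]]]; [contradiction|].
  destruct Hb as [<-|Hb].
  - assert (countP P l <= countP Q l) by (apply countP_mono; auto).
    destruct (excluded_middle_informative (P a)); destruct (excluded_middle_informative (Q a));
    try lia; contradiction.
  - assert (countP P l < countP Q l) by (apply IHl; eauto).
    destruct (excluded_middle_informative (P a)); destruct (excluded_middle_informative (Q a));
    try lia. exfalso; eauto.
Qed.

Lemma ltC_trans C T a b c : ltC I C T a b -> ltC I C T b c -> ltC I C T a c.
Proof.
  intros [l1 [H1 E1]] [l2 [H2 E2]].
  destruct (Nat.lt_trichotomy l1 l2) as [h|[h|h]].
  - exists l2. split. rewrite E1 by lia. lia. intros h' hh. rewrite E1 by lia. apply E2; lia.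
  - subst. exists l2. split. lia. intros; rewrite E1, E2; auto.
  - exists l1. split. rewrite <- E2 by lia. lia. intros; rewrite E1 by lia; apply E2; lia.
Qed.

Lemma le_lt C T a b c : leC I C T a b -> ltC I C T b c -> ltC I C T a c.
Proof.
  intros [H|H] H2; [eapply ltC_trans; eauto|].
  destruct H2 as [l [A B]]; exists l; rewrite !H; split; auto.
  intros h hh; rewrite H; auto.
Qed.

Lemma lt_le C T a b c : ltC I C T a b -> leC I C T b c -> ltC I C T a c.
Proof.
  intros H2 [H|H]; [eapply ltC_trans; eauto|].
  destruct H2 as [l [A B]]; exists l; rewrite <- !H; split; auto.
  intros h hh; rewrite <- H; auto.
Qed.

Lemma le_le C T a b c : leC I C T a b -> leC I C T b c -> leC I C T a c.
Proof.
  intros [H|H] H2.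
  - left. eapply lt_le; eauto.
  - destruct H2 as [H2|H2].
    + left. eapply le_lt; eauto. right; auto.
    + right. intros; rewrite H; auto.
Qed.

Lemma ms_trans A B C : more_specific K A B -> more_specific K B C -> more_specific K A C.
Proof.
  unfold more_specific, strict_subsumes.
  intros [H1 H2] [H3 H4]. split.
  - intros; eauto.
  - intros H. apply H2. intros; eauto.
Qed.

Lemma ms_irrefl A : ~ more_specific K A A.
Proof. unfold more_specific, strict_subsumes. intros [_ H]; apply H; auto. Qed.

Definition meas (C : concept NC NR) :=
  countP (fun p => more_specific K (fst p) C) (kb_dist K).

Lemma meas_lt H Th E : In (H, Th) (kb_dist K) -> more_specific K H E -> meas H < meas E.
Proof.
  intros Hin Hms. unfold meas. apply countP_lt.
  - intros a _ Ha. eapply ms_trans; eauto.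
  - exists (H, Th). simpl. split; auto. split; auto. apply ms_irrefl.
Qed.

Lemma gpref_trans x y z : gpref K I x y -> gpref K I y z -> gpref K I x z.
Proof.
  intros [[Ci [Ti [Hi Hlt]]] Hxy] [_ Hyz].
  set (Ex := fun Ce => exists Ch Th, In (Ch, Th) (kb_dist K) /\ more_specific K Ch Ce /\
                          ltC I Ch Th x z).
  assert (R : forall n Ce Te, meas Ce <= n -> In (Ce, Te) (kb_dist K) ->
     (leC I Ce Te x z \/ Ex Ce) /\
     (ltC I Ce Te x y \/ ltC I Ce Te y z -> ltC I Ce Te x z \/ Ex Ce)).
  { induction n as [n IH] using lt_wf_ind.
    intros Ce Te Hm Hin.
    assert (Sec : forall H Th, In (H, Th) (kb_dist K) -> more_specific K H Ce ->
                  ltC I H Th x y \/ ltC I H Th y z -> Ex Ce).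
    { intros H Th HH Hms Hl.
      assert (Hmh : meas H < meas Ce) by (eapply meas_lt; eauto).
      destruct (IH (meas H) ltac:(lia) H Th (le_n _) HH) as [_ S].
      destruct (S Hl) as [S1|[H' [Th' [A [B C]]]]].
      - exists H, Th; auto.
      - exists H', Th'; split; auto. split; auto. eapply ms_trans; eauto. }
    split.
    - destruct (Hxy Ce Te Hin) as [A|[H [Th [A [B C]]]]];
      [|right; eapply Sec; eauto].
      destruct (Hyz Ce Te Hin) as [A'|[H [Th [A' [B C]]]]];
      [|right; eapply Sec; eauto].
      left; eapply le_le; eauto.
    - intros [Hl|Hl].
      + destruct (Hyz Ce Te Hin) as [A'|[H [Th [A' [B C]]]]].
        * left; eapply lt_le; eauto.
        * right; eapply Sec; eauto.
      + destruct (Hxy Ce Te Hin) as [A'|[H [Th [A' [B C]]]]].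
        * left; eapply le_lt; eauto.
        * right; eapply Sec; eauto. }
  split.
  - destruct (R _ Ci Ti (le_n _) Hi) as [_ S].
    destruct (S (or_introl Hlt)) as [S1|[H' [Th' [A [B C]]]]].
    + exists Ci, Ti; auto.
    + exists H', Th'; auto.
  - intros Cj Tj Hj. destruct (R _ Cj Tj (le_n _) Hj) as [S _]. exact S.
Qed.

Definition bP (P : Prop) : bool := if excluded_middle_informative P then true else false.

Lemma bP_iff P Q : bP P = bP Q -> (P <-> Q).
Proof.
  unfold bP; destruct (excluded_middle_informative P); destruct (excluded_middle_informative Q);
  intros; try discriminate; tauto.
Qed.

Definition key (x : Delta) : list bool :=
  flat_map (fun p => map (fun q => bP (sat_typ I (fst p) (fst q) x)) (snd p)) (kb_dist K).

Lemma key_len x : length (key x) = length (flat_map (@snd _ _) (kb_dist K)).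
Proof.
  unfold key. induction (kb_dist K); simpl; auto.
  rewrite !length_app, length_map. lia.
Qed.

Lemma app_eq_len (A : Type) (a a' b b' : list A) :
  length a = length a' -> a ++ b = a' ++ b' -> a = a' /\ b = b'.
Proof.
  revert a'; induction a; destruct a'; simpl; intros Hl He; try discriminate; auto.
  injection He; intros; subst. destruct (IHa a' ltac:(lia) H); subst; auto.
Qed.

Lemma flat_map_inj (A B : Type) (f g : A -> list B) l :
  (forall p, length (f p) = length (g p)) -> flat_map f l = flat_map g l ->
  forall p, In p l -> f p = g p.
Proof.
  induction l; simpl; intros Hl He p Hp; [contradiction|].
  destruct (app_eq_len _ _ _ _ _ (Hl a) He) as [E1 E2].
  destruct Hp as [<-|Hp]; auto.
Qed.

Lemma map_inj_in (A B : Type) (f g : A -> B) l :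
  map f l = map g l -> forall a, In a l -> f a = g a.
Proof.
  induction l; simpl; intros He a' Ha; [contradiction|].
  injection He; intros. destruct Ha as [<-|Ha]; auto.
Qed.

Lemma key_nsat z x : key z = key x -> forall C T, In (C, T) (kb_dist K) ->
  forall l, nsat I C T l z = nsat I C T l x.
Proof.
  intros Hk C T Hin l.
  pose proof (flat_map_inj _ _ _ _ (kb_dist K) (fun p => eq_trans (length_map _ _) (eq_sym (length_map _ _))) Hk _ Hin) as E.
  simpl in E. unfold nsat. apply countP_ext. intros q Hq.
  pose proof (map_inj_in _ _ _ _ _ E q Hq) as E2. simpl in E2.
  apply bP_iff in E2. tauto.
Qed.

Fixpoint allb (n : nat) : list (list bool) :=
  match n with
  | 0 => [[]]
  | S n => map (cons true) (allb n) ++ map (cons false) (allb n)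
  end.

Lemma In_allb l : In l (allb (length l)).
Proof.
  induction l; simpl; auto. apply in_or_app; destruct a; [left|right]; apply in_map; auto.
Qed.

Lemma gpref_wf : well_founded (fun a b => gpref K I a b).
Proof.
  set (n := length (flat_map (@snd _ _) (kb_dist K))).
  apply (well_founded_lt_compat _
    (fun y => countP (fun k => exists z, key z = k /\ gpref K I z y) (allb n))).
  intros x y Hxy. apply countP_lt.
  - intros k _ [z [Hz Hzx]]. exists z; split; auto. eapply gpref_trans; eauto.
  - exists (key x). split.
    + unfold n. rewrite <- (key_len x). apply In_allb.
    + split. exists x; auto.
      intros [z [Hz [[Ci [Ti [Hi [l [Hl _]]]]] _]]].
      rewrite (key_nsat z x Hz Ci Ti Hi l) in Hl. lia.
Qed.

Lemma min_exists (P : Delta -> Prop) y : P y ->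
  exists m, P m /\ forall z, P z -> ~ gpref K I z m.
Proof.
  induction y as [y IH] using (well_founded_ind gpref_wf). intros Py.
  destruct (classic (exists z, P z /\ gpref K I z y)) as [[z [Pz Hz]]|N].
  - eapply IH; eauto.
  - exists y; split; auto. intros z Pz Hz; apply N; eauto.
Qed.

End Aux.

Theorem proposition6 (NC NR NI : Type) (K : KB NC NR NI) (HK : wf_KB K) :
  let concept := concept NC NR in
  (* REFL *)
  (forall (C : concept), cwm_entails K C C) /\
  (* LLE *)
  (forall (A B C : concept), valid_equiv NI A B -> cwm_entails K A C -> cwm_entails K B C) /\
  (* RW *)
  (forall (A C D : concept), valid_incl NI C D -> cwm_entails K A C -> cwm_entails K A D) /\
  (* AND *)
  (forall (A C D : concept), cwm_entails K A C -> cwm_entails K A D ->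
     cwm_entails K A (CAnd C D)) /\
  (* OR *)
  (forall (A B C : concept), cwm_entails K A C -> cwm_entails K B C ->
     cwm_entails K (COr A B) C) /\
  (* CM *)
  (forall (A C D : concept), cwm_entails K A D -> cwm_entails K A C ->
     cwm_entails K (CAnd A D) C).
Proof.
  intros concept. split; [|split; [|split; [|split; [|split]]]].
  - intros C D I Hm Hc Ht x [Hx _]; exact Hx.
  - intros A B C [HAB HBA] H D I Hm Hc Ht x [Hx Hmin].
    apply (H D I Hm Hc Ht x). split. apply HBA; auto.
    intros [y [Hy Hg]]. apply Hmin. exists y; split; [apply HAB; exact Hy | exact Hg].
  - intros A C D HCD H Delta I Hm Hc Ht x Hx. apply HCD. eapply H; eauto.
  - intros A C D H1 H2 Delta I Hm Hc Ht x Hx. simpl. split; eauto.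
  - intros A B C HA HB D I Hm Hc Ht x [Hx Hmin].
    destruct Hx as [Hx|Hx]; [apply (HA D I Hm Hc Ht x)|apply (HB D I Hm Hc Ht x)]; split; auto;
      intros [y [Hy Hg]]; apply Hmin; exists y; split; simpl; auto.
  - intros A C D HD HC Delta I Hm Hc Ht x [[HxA HxD] Hmin].
    apply (HC Delta I Hm Hc Ht x). split; auto.
    intros [y [Hy Hg]].
    destruct (min_exists _ _ _ K _ I (fun z => ext I A z /\ gpref K I z x) y (conj Hy Hg))
      as [m [[HmA Hmx] Hmm]].
    apply Hmin. exists m. split; auto. simpl. split; auto.
    apply (HD Delta I Hm Hc Ht m). split; auto.
    intros [z [Hz Hzm]]. apply (Hmm z); auto. split; auto. eapply gpref_trans; eauto.
Qed.
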